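(* Let $k\ge0$ be real. For $x=e^{i\theta}$ on the unit circle with $\cos\theta\ne0$, set $$\Delta_k(x)=k^2-16\cos^2\theta\,(3-4\cos^2\theta),\qquad y_{1}(x)=\frac{k+\sqrt{\Delta_k(x)}}{4\cos\theta},\qquad y_{2}(x)=\frac{k-\sqrt{\Delta_k(x)}}{4\cos\theta}.$$ Then: (i) If $k\ge3$ then $\Delta_k(x)\ge0$, so that $y_1(x)$ and $y_2(x)$ are real. (ii) If $0\le k<3$ then $y_1(x)$ and $y_2(x)$ are complex conjugate to each other whenever $$\frac{3-\sqrt{9-k^2}}8<\cos^2\theta<\frac{3+\sqrt{9-k^2}}8,$$ and in this case $|y_1(x)|=|y_2(x)|=|3-4\cos^2\theta|^{1/2}$. Furthermore, $|y_1(x)|=|y_2(x)|>1$ holds if and only if $\frac{3-\sqrt{9-k^2}}8<\cos^2\theta<\frac12$ when $0\le k<2\sqrt2$, and if and only if $\frac{3-\sqrt{9-k^2}}8<\cos^2\theta<\frac{3+\sqrt{9-k^2}}8$ when $2\sqrt2\le k<3$.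
   Context: $y_1(x),y_2(x)$ are the two roots in $y$ of $(x+x^{-1})y^2-ky-(x^3+x^{-3})=0$ (which equals $-y^3R_k(x/y,1/(xy))$ for $R_k(x,y)=y^3-y+x^3-x+kxy$); their product is $3-4\cos^2\theta$. Here $\sqrt{\cdot}$ is the principal square root. *)

(* Defs.v *)
From Stdlib Require Import Reals.
From Coquelicot Require Import Coquelicot.
Open Scope R_scope.

Definition psqrtR (a : R) : C :=
  if Rle_dec 0 a then RtoC (sqrt a) else (0, sqrt (- a)).

Definition DeltaK (k theta : R) : R :=
  k ^ 2 - 16 * (cos theta) ^ 2 * (3 - 4 * (cos theta) ^ 2).

Definition y1 (k theta : R) : C :=
  Cdiv (Cplus (RtoC k) (psqrtR (DeltaK k theta))) (RtoC (4 * cos theta)).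

Definition y2 (k theta : R) : C :=
  Cdiv (Cminus (RtoC k) (psqrtR (DeltaK k theta))) (RtoC (4 * cos theta)).

(* Main.v *)
Require Import Defs.
From Stdlib Require Import Reals Lra Psatz.
From Coquelicot Require Import Coquelicot.
Open Scope R_scope.

Lemma divC_real (a b d : R) : d <> 0 ->
  Cdiv (a, b) (RtoC d) = (a / d, b / d).
Proof.
  intros Hd. unfold Cdiv, Cinv, Cmult, RtoC; simpl.
  f_equal; field; auto.
Qed.

Theorem lemma1 (k theta : R) :
  0 <= k -> cos theta <> 0 ->
  (3 <= k ->
     0 <= DeltaK k theta /\ Complex.Im (y1 k theta) = 0 /\ Complex.Im (y2 k theta) = 0) /\
  (k < 3 ->
     (3 - sqrt (9 - k ^ 2)) / 8 < (cos theta) ^ 2 < (3 + sqrt (9 - k ^ 2)) / 8 ->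
     y2 k theta = Cconj (y1 k theta) /\
     Cmod (y1 k theta) = sqrt (Rabs (3 - 4 * (cos theta) ^ 2)) /\
     Cmod (y2 k theta) = sqrt (Rabs (3 - 4 * (cos theta) ^ 2)) /\
     (k < 2 * sqrt 2 ->
        (Cmod (y1 k theta) = Cmod (y2 k theta) /\ 1 < Cmod (y1 k theta) <->
         (3 - sqrt (9 - k ^ 2)) / 8 < (cos theta) ^ 2 < 1 / 2)) /\
     (2 * sqrt 2 <= k ->
        (Cmod (y1 k theta) = Cmod (y2 k theta) /\ 1 < Cmod (y1 k theta) <->
         (3 - sqrt (9 - k ^ 2)) / 8 < (cos theta) ^ 2 < (3 + sqrt (9 - k ^ 2)) / 8))).
Proof.
  intros Hk Hc.
  assert (H4c : 4 * cos theta <> 0) by lra.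
  assert (Hc2 : 0 < cos theta ^ 2) by (apply pow2_gt_0 ; auto).
  split.
  - intros Hk3.
    assert (HD : 0 <= DeltaK k theta).
    { unfold DeltaK. set (c := cos theta ^ 2). 
      replace ((cos theta)^2) with c by reflexivity.
      clearbody c. assert (0 <= (8*c-3)*(8*c-3)) by apply Rle_0_sqr. assert (9 <= k*k) by nra. replace (k^2) with (k*k) by ring. lra. }
    split; [exact HD|].
    unfold y1, y2, psqrtR. destruct (Rle_dec 0 (DeltaK k theta)) as [_|n]; [|lra].
    unfold Cplus, Cminus, Copp, RtoC. simpl.
    split; unfold Rdiv; ring.
  - intros Hk3 [Hl Hu].
    set (s := sqrt (9 - k ^ 2)) in *.
    assert (Hs0 : 0 <= s) by apply sqrt_pos.
    assert (Hs2 : s * s = 9 - k ^ 2) by (apply sqrt_sqrt; nra).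
    set (c := cos theta ^ 2) in *.
    assert (HD : DeltaK k theta < 0).
    { unfold DeltaK. fold c. nra. }
    assert (Hs3 : s <= 3) by nra.
    assert (Hpos : 0 < 3 - 4 * c) by nra.
    unfold y1, y2, psqrtR. destruct (Rle_dec 0 (DeltaK k theta)) as [n|_]; [lra|].
    set (q := sqrt (- DeltaK k theta)).
    assert (Hq : q * q = - DeltaK k theta) by (apply sqrt_sqrt; lra).
    assert (E1 : Cdiv (Cplus (RtoC k) (0, q)) (RtoC (4 * cos theta)) = (k / (4 * cos theta), q / (4 * cos theta))).
    { unfold Cdiv, Cinv, Cmult, Cplus, RtoC; simpl. f_equal; field; auto. }
    assert (E2 : Cdiv (Cminus (RtoC k) (0, q)) (RtoC (4 * cos theta)) = (k / (4 * cos theta), - q / (4 * cos theta))).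
    { unfold Cdiv, Cinv, Cmult, Cminus, Cplus, Copp, RtoC; simpl. f_equal; field; auto. }
    rewrite E1, E2.
    assert (Hm : forall b, Cmod (k / (4 * cos theta), b / (4 * cos theta)) = sqrt (Rabs (3 - 4*c))
               \/ b * b <> q * q).
    { intros b. destruct (Req_dec (b*b) (q*q)) as [E|E]; [left|right; exact E].
      unfold Cmod; simpl. f_equal. rewrite Rabs_pos_eq by lra.
      unfold c. field_simplify; auto.
      replace (b^2) with (b*b) by ring. rewrite E, Hq. unfold DeltaK. field. auto. }
    assert (Hm1 : Cmod (k / (4 * cos theta), q / (4 * cos theta)) = sqrt (Rabs (3 - 4*c))).
    { destruct (Hm q); [auto|lra]. }
    assert (Hm2 : Cmod (k / (4 * cos theta), - q / (4 * cos theta)) = sqrt (Rabs (3 - 4*c))).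
    { destruct (Hm (- q)); [auto|]. exfalso. apply H. ring. }
    rewrite Rabs_pos_eq in Hm1, Hm2 by lra.
    rewrite Hm1, Hm2. rewrite Rabs_pos_eq by lra.
    assert (Hiff : 1 < sqrt (3 - 4 * c) <-> c < 1/2).
    { split; intro H.
      - destruct (Rlt_or_le c (1/2)) as [h|h]; auto.
        assert (sqrt (3 - 4*c) <= sqrt 1) by (apply sqrt_le_1_alt; lra).
        rewrite sqrt_1 in H0. lra.
      - rewrite <- sqrt_1. apply sqrt_lt_1_alt. lra. }
    assert (H22 : sqrt 2 * sqrt 2 = 2) by (apply sqrt_sqrt; lra).
    assert (Hs22 : 0 <= sqrt 2) by apply sqrt_pos.
    split.
    { unfold Cconj; simpl. f_equal; field; auto. }
    split; [reflexivity|]. split; [reflexivity|].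
    split.
    + intros Hk2. assert (1 < s) by nra.
      rewrite Hiff. split; [intros [_ h]; lra | intros [_ h]; split; [reflexivity|lra]].
    + intros Hk2. assert (s <= 1) by nra.
      rewrite Hiff. split; [intros [_ h]; lra | intros _; split; [reflexivity|lra]].
Qed.
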